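(* For every positive integer $k$, $$4k-2 < r_<(NM_k, K_3) \leq 6k.$$
   Context: An ordered graph on $[N]$ is a graph with vertex set $\{1,\dots,N\}$ equipped with the natural order. Given a red/blue coloring of the edges of the complete graph on $[N]$, a red (ordered) copy of an ordered graph $G$ on $[p]$ is a strictly increasing map $\varphi:[p]\to[N]$ such that $\varphi(u)\varphi(v)$ is red for every edge $uv$ of $G$. The ordered Ramsey number $r_<(G,K_3)$ is the smallest $N$ such that every red/blue coloring of the edges of the complete graph on $[N]$ contains either a red ordered copy of $G$ or a blue triangle. The nested matching $NM_k$ is the ordered graph on $[2k]$ in which $\{i,j\}$ is an edge if and only if $i+j=2k+1$. *)

(* Defs.v *)
From mathcomp Require Import all_boot.

(* Ordered graphs on [N] = {1,...,N}; vertices are naturals.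
   A red/blue colouring of the edges of K_N is a function
   c : nat -> nat -> bool, where the colour of the edge {a,b} with a < b
   is c a b (true = red, false = blue); values c a b with a >= b are ignored. *)
Definition red (c : nat -> nat -> bool) (a b : nat) : bool :=
  if a < b then c a b else c b a.

Definition NM_edge (k i j : nat) : bool := (i != j) && (i + j == 2 * k + 1).

Definition red_copy_NM (k N : nat) (c : nat -> nat -> bool) : Prop :=
  exists phi : nat -> nat,
    (forall u, 1 <= u <= 2 * k -> 1 <= phi u <= N) /\
    (forall u v, 1 <= u -> u < v -> v <= 2 * k -> phi u < phi v) /\
    (forall u v, 1 <= u <= 2 * k -> 1 <= v <= 2 * k -> NM_edge k u v ->
       red c (phi u) (phi v)).

Definition blue_triangle (N : nat) (c : nat -> nat -> bool) : Prop :=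
  exists a b d, [/\ 1 <= a, a < b, b < d, d <= N &
    [/\ ~~ red c a b, ~~ red c a d & ~~ red c b d]].

Definition arrows_NM_K3 (k N : nat) : Prop :=
  forall c : nat -> nat -> bool, red_copy_NM k N c \/ blue_triangle N c.

Definition is_ramsey_NM_K3 (k r : nat) : Prop :=
  arrows_NM_K3 k r /\ forall N, N < r -> ~ arrows_NM_K3 k N.

(* Main.v *)
Require Import Defs.
From Stdlib Require Import Classical.
From mathcomp Require Import all_boot zify.

Lemma red_sym c a b : red c a b = red c b a.
Proof. by rewrite /red; case: ltngtP => // ->. Qed.

Lemma count_sum (p : pred nat) r : count p r = \sum_(j <- r) p j.
Proof. by elim: r => [|x r IH]; rewrite ?big_nil ?big_cons //= IH. Qed.

Lemma exists_min (P : nat -> Prop) n : P n -> exists m, P m /\ forall j, j < m -> ~ P j.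
Proof.
elim/ltn_ind: n => n IH Pn.
case: (classic (exists j, j < n /\ P j)) => [[j [hj Pj]] | H].
  exact: IH j hj Pj.
exists n; split=> // j hj Pj; apply H; by exists j.
Qed.

Lemma no_blue_tri N c : ~ blue_triangle N c -> forall x y z,
  1 <= x <= N -> 1 <= y <= N -> 1 <= z <= N -> x != y -> x != z -> y != z ->
  ~~ red c x y -> ~~ red c x z -> red c y z.
Proof.
move=> H x y z hx hy hz nxy nxz nyz bxy bxz; apply/negPn/negP => byz; apply: H.
have byx : ~~ red c y x by rewrite red_sym.
have bzx : ~~ red c z x by rewrite red_sym.
have bzy : ~~ red c z y by rewrite red_sym.
case: (ltngtP x y) => [xy|yx|e]; last by rewrite e eqxx in nxy.
- case: (ltngtP y z) => [yz|zy|e]; last by rewrite e eqxx in nyz.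
  + by exists x, y, z; split => //; lia.
  + case: (ltngtP x z) => [xz|zx|e]; last by rewrite e eqxx in nxz.
    * by exists x, z, y; split => //; lia.
    * by exists z, x, y; split => //; lia.
- case: (ltngtP x z) => [xz|zx|e]; last by rewrite e eqxx in nxz.
  + by exists y, x, z; split => //; lia.
  + case: (ltngtP y z) => [yz|zy|e]; last by rewrite e eqxx in nyz.
    * by exists y, z, x; split => //; lia.
    * by exists z, y, x; split => //; lia.
Qed.

Lemma lower k N : 0 < k -> N <= 4 * k - 2 -> ~ arrows_NM_K3 k N.
Proof.
move=> hk hN /(_ (fun a b => (a < 2 * k) == (b < 2 * k))).
case=> [[phi [hr [hm he]]] | [a [b [d [h1 h2 h3 h4 [e1 e2 e3]]]]]].
- have grow : forall t, t < 2 * k -> phi 1 + t <= phi t.+1.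
    elim => [|t IH] ht; first by rewrite addn0.
    have := IH (ltnW ht); have := hm t.+1 t.+2 isT (ltnSn _) ht; lia.
  have ne : NM_edge k 1 (2 * k).
    rewrite /NM_edge; apply/andP; split; [apply/eqP|apply/eqP]; lia.
  have e := he 1 (2 * k) ltac:(lia) ltac:(lia) ne.
  have r1 := hr 1 ltac:(lia); have r2 := hr (2 * k) ltac:(lia).
  have g := grow (2 * k).-1 ltac:(lia).
  have m := hm 1 (2 * k) isT ltac:(lia) (leqnn _).
  move: e; rewrite /red m.
  move: g r1 r2 m.
  have -> : ((2 * k).-1).+1 = 2 * k by lia.
  case: (ltnP (phi 1) (2 * k)); case: (ltnP (phi (2 * k)) (2 * k)) => //= ? ? ? ? ? ?; lia.
- move: e1 e2 e3; rewrite /red h2 h3 (ltn_trans h2 h3) /=.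
  by case: (a < 2 * k); case: (b < 2 * k); case: (d < 2 * k).
Qed.

Lemma clique_copy k N c (i : nat) : i < N -> ~ blue_triangle N c ->
  2 * k <= count (fun j => (i != j) && ~~ red c i.+1 j.+1) (iota 0 N) ->
  red_copy_NM k N c.
Proof.
move=> hi H hcnt.
set p := (fun j => _) in hcnt.
set L := filter p (iota 0 N).
have hsz : 2 * k <= size L by rewrite size_filter.
have srt : sorted ltn L by apply: sorted_filter; [exact: ltn_trans | exact: iota_ltn_sorted].
have memL : forall t, t < size L -> nth 0 L t < N /\ p (nth 0 L t).
  move=> t ht; have := mem_nth 0 ht; rewrite mem_filter mem_iota => /andP[-> /andP[_ ->]].
  by [].
have mono : forall t t', t < t' -> t' < size L -> nth 0 L t < nth 0 L t'.
  move=> t t' htt ht'; apply: (sorted_ltn_nth ltn_trans) => //; rewrite inE //.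
  exact: ltn_trans htt ht'.
exists (fun u => (nth 0 L u.-1).+1); split; [|split].
- move=> u hu; have [h _] := memL u.-1 ltac:(lia); lia.
- move=> u v hu huv hv; have := mono u.-1 v.-1 ltac:(lia) ltac:(lia); lia.
- move=> u v hu hv /andP[huv _].
  have [hu1 pu] := memL u.-1 ltac:(lia).
  have [hv1 pv] := memL v.-1 ltac:(lia).
  have neq : nth 0 L u.-1 != nth 0 L v.-1.
    case: (ltngtP u v) => [l|l|e]; last by rewrite e eqxx in huv.
    + have := mono u.-1 v.-1 ltac:(lia) ltac:(lia); lia.
    + have := mono v.-1 u.-1 ltac:(lia) ltac:(lia); lia.
  move: pu pv; rewrite /p => /andP[nu bu] /andP[nv bv].
  apply: (@no_blue_tri N c H i.+1) => //; try lia.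
Qed.

Definition Dp N c S i : bool :=
  (i <= S) && (S - i < N) && ((i < S - i) && ((i != S - i) && red c i.+1 (S - i).+1)).

Lemma class_copy k N c S : k <= count (Dp N c S) (iota 0 N) -> red_copy_NM k N c.
Proof.
move=> hcnt.
set L := filter (Dp N c S) (iota 0 N).
have hsz : k <= size L by rewrite size_filter.
have srt : sorted ltn L by apply: sorted_filter; [exact: ltn_trans | exact: iota_ltn_sorted].
set a := fun t => nth 0 L t.
have memL : forall t, t < k -> [/\ a t <= S, S - a t < N, a t < S - a t &
                                     red c (a t).+1 (S - a t).+1].
  move=> t ht; have := mem_nth 0 (leq_trans ht hsz); rewrite mem_filter.
  case/andP => hD _; move: hD; rewrite /Dp.
  by case/andP => /andP[h1 h2] /andP[h3 /andP[_ h4]]; split.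
have mono : forall t t', t < t' -> t' < k -> a t < a t'.
  move=> t t' htt ht'; apply: (sorted_ltn_nth ltn_trans) => //; rewrite inE; lia.
have monoe : forall t t', t <= t' -> t' < k -> a t <= a t'.
  move=> t t' htt ht'; case: (ltngtP t t') => [l|l|->] //; last lia.
  by apply: ltnW; apply: mono.
exists (fun u => if u <= k then (a u.-1).+1 else (S - a (2 * k - u)).+1); split; [|split].
- move=> u hu; case: ifP => hk.
  + have [? ? ? _] := memL u.-1 ltac:(lia); lia.
  + have [? ? ? _] := memL (2 * k - u) ltac:(lia); lia.
- move=> u v hu huv hv; case: ifP => hku; case: ifP => hkv.
  + have := mono u.-1 v.-1 ltac:(lia) ltac:(lia); lia.
  + have [? ? ? _] := memL u.-1 ltac:(lia).
    have [? ? ? _] := memL (2 * k - v) ltac:(lia).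
    case: (leqP u.-1 (2 * k - v)) => h.
    * have := monoe _ _ h ltac:(lia); lia.
    * have := mono _ _ h ltac:(lia); lia.
  + lia.
  + have [? ? ? _] := memL (2 * k - u) ltac:(lia).
    have := mono (2 * k - v) (2 * k - u) ltac:(lia) ltac:(lia); lia.
- move=> u v hu hv /andP[huv /eqP huv2].
  case: ifP => hku; case: ifP => hkv; try lia.
  + have -> : 2 * k - v = u.-1 by lia.
    by have [? ? ? ->] := memL u.-1 ltac:(lia).
  + have -> : 2 * k - u = v.-1 by lia.
    by rewrite red_sym; have [? ? ? ->] := memL v.-1 ltac:(lia).
Qed.

Lemma count_ord (p : pred nat) n : count p (iota 0 n) = \sum_(i < n) p i.
Proof.
elim: n => [|n IH]; first by rewrite big_ord0.
have -> : iota 0 n.+1 = iota 0 n ++ [:: n] by rewrite -addn1 iotaD.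
by rewrite big_ord_recr -IH count_cat /= addn0.
Qed.

Lemma onept (m x : nat) (b : bool) : x < m -> \sum_(S < m) ((S == x :> nat) && b) = b.
Proof.
move=> hx; rewrite (bigD1 (Ordinal hx)) //= eqxx big1 ?addn0 // => S hS.
case: eqP => // e; exfalso; move/eqP: hS; apply; exact: val_inj.
Qed.

Lemma onept2 (m S i : nat) (g : nat -> bool) :
  \sum_(j < m) ((S == i + j) && g j) = (i <= S) && (S - i < m) && g (S - i).
Proof.
case: (boolP ((i <= S) && (S - i < m))) => [/andP[h1 h2]|h] /=.
  rewrite -(@onept m (S - i) (g (S - i)) h2); apply: eq_bigr => j _.
  have -> : (S == i + j) = (j == S - i :> nat) by apply/eqP/eqP; lia.
  by case: eqP => // ->.
rewrite big1 // => j _; case: eqP => // e; exfalso; move: h; rewrite e.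
have := ltn_ord j; lia.
Qed.

Lemma upper k c : 0 < k -> ~ blue_triangle (6 * k) c -> red_copy_NM k (6 * k) c.
Proof.
move=> hk H; set n := 6 * k.
pose bl (i j : nat) : bool := (i != j) && ~~ red c i.+1 j.+1.
pose rd (i j : nat) : bool := (i != j) && red c i.+1 j.+1.
case: (boolP [exists i : 'I_n, 2 * k <= \sum_(j < n) bl i j]).
  case/existsP => i hi; apply: (@clique_copy k n c i (ltn_ord i) H).
  by rewrite count_ord.
rewrite negb_exists => /forallP hall.
have hsym : forall i j, rd i j = rd j i by move=> i j; rewrite /rd eq_sym red_sym.
have hsplit : forall i j, rd i j = ((i < j) && rd i j) + ((j < i) && rd i j) :> nat.
  by move=> i j; case: ltngtP => [_|_|->]; rewrite /= ?addn0 // /rd eqxx.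
set T := \sum_(i < n) \sum_(j < n) rd i j.
set F := \sum_(i < n) \sum_(j < n) ((i < j) && rd i j).
have TF : T = F + F.
  rewrite /T /F.
  transitivity (\sum_(i < n) \sum_(j < n) (((i < j) && rd i j) + ((j < i) && rd i j))).
    by apply: eq_bigr => i _; apply: eq_bigr => j _; exact: hsplit.
  under eq_bigr do rewrite big_split.
  rewrite big_split /=; congr (_ + _).
  rewrite exchange_big /=; apply: eq_bigr => i _; apply: eq_bigr => j _.
  by rewrite hsym.
have TB : T + \sum_(i < n) \sum_(j < n) bl i j = n * n.-1.
  rewrite /T -big_split /=.
  transitivity (\sum_(i < n) n.-1); last by rewrite big_const_ord iter_addn_0 mulnC.
  apply: eq_bigr => i _; rewrite -big_split /=.
  transitivity (\sum_(j < n) ((i : nat) != j)).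
    by apply: eq_bigr => j _; rewrite /rd /bl; case: (_ != _); case: red.
  have h1 : \sum_(j < n) ((i : nat) == j) = 1.
    rewrite (bigD1 i) //= eqxx big1 // => j hj.
    case: eqP => // e; exfalso; move/eqP: hj; apply; exact: val_inj.
  have h2 : \sum_(j < n) (((i : nat) != j) + ((i : nat) == j)) = n.
    rewrite (eq_bigr (fun => 1)) ?big_const_ord ?iter_addn_0 ?mul1n //.
    by move=> j _; case: eqP.
  rewrite big_split /= h1 in h2; have e : forall Y, Y + 1 = n -> Y = n.-1 by move=> Y; lia.
  exact: e _ h2.
have Bb : \sum_(i < n) \sum_(j < n) bl i j <= n * (2 * k).-1.
  have : \sum_(i < n) \sum_(j < n) bl i j <= \sum_(i < n) (2 * k).-1.
    by apply: leq_sum => i _; have := hall i; rewrite -ltnNge; lia.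
  by rewrite big_const_ord iter_addn_0 mulnC.
have FS : F = \sum_(S < 2 * n) \sum_(i < n) Dp n c S i.
  rewrite /F.
  transitivity (\sum_(i < n) \sum_(j < n) \sum_(S < 2 * n) ((S == i + j :> nat) && ((i < j) && rd i j))).
    apply: eq_bigr => i _; apply: eq_bigr => j _; rewrite onept //.
    have := ltn_ord i; have := ltn_ord j; lia.
  under eq_bigr do rewrite exchange_big.
  rewrite exchange_big; apply: eq_bigr => S _; apply: eq_bigr => i _.
  rewrite (onept2 n S i (fun j => (i < j) && rd i j)). by [].
case: (boolP [exists S : 'I_(2 * n), k <= \sum_(i < n) Dp n c S i]).
  by case/existsP => S hS; apply: (@class_copy k n c S); rewrite count_ord.
rewrite negb_exists => /forallP hS; exfalso.
have : F <= 2 * n * k.-1.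
  rewrite FS.
  have : \sum_(S < 2 * n) \sum_(i < n) Dp n c S i <= \sum_(S < 2 * n) k.-1.
    by apply: leq_sum => S _; have := hS S; rewrite -ltnNge; lia.
  rewrite big_const_ord iter_addn_0; lia.
move: TF TB Bb; rewrite /n => TF TB Bb hF.
nia.
Qed.

Theorem proposition2p1 (k : nat) : 0 < k ->
  exists r, is_ramsey_NM_K3 k r /\ 4 * k - 2 < r <= 6 * k.
Proof.
move=> hk.
have A : arrows_NM_K3 k (6 * k).
  move=> c; case: (classic (blue_triangle (6 * k) c)) => h; first by right.
  by left; apply: upper.
have [r [Ar Hmin]] := @exists_min (arrows_NM_K3 k) (6 * k) A.
exists r; split; first by split.
apply/andP; split.
  rewrite ltnNge; apply/negP => hr; exact: (@lower k r hk hr Ar).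
rewrite leqNgt; apply/negP => hr; exact: (Hmin _ hr A).
Qed.
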